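(* Let $g\ge2$, let $C$ be a stable curve of compact type of genus $g$, and let $X$ be an irreducible component of $C$. Let $M$ be an $X$-quasistable line bundle on $C$ of multidegree $\underline d$ (of total degree $d$), and let $M'$ be a line bundle on $C$ of degree $1$ on $X$ and degree $0$ on every other component. Then the line bundle $$M\otimes M'\otimes\mathcal O_C\Big(-\sum_{Z\in\mathcal T_{\underline d}(X)}Z\Big)$$ is $X$-quasistable.
   Context: All curves are connected, projective, reduced, nodal, over an algebraically closed field; $g_C=1-\chi(\mathcal O_C)$. Subcurve: union of irreducible components; $Y'$ is the closure of the complement, $k_Y=\#(Y\cap Y')$. Tail: subcurve $Z$ with $k_Z=1$. Compact type: every node separating. Stable: every smooth rational component meets the rest in $\ge3$ points. Multidegree of $L$: $(\deg L|_{X_i})_i$, total degree $d$, $d_Y=\sum_{X_i\subseteq Y}d_i$. $\deg\omega_C|_Y=2g_Y-2+k_Y$. A multidegree $\underline d$ of total degree $d$ is semistable if $|d_Y-\frac{d}{2g-2}\deg\omega_C|_Y|\le k_Y/2$ for all non-empty proper subcurves $Y$, and $X$-quasistable if in addition $d_Y-\frac{d}{2g-2}\deg\omega_C|_Y>-k_Y/2$ for every proper subcurve $Y\supseteq X$; a line bundle is semistable/$X$-quasistable if its multidegree is. For a tail $Z$ with $Z\cap Z'=\{n\}$, $\mathcal O_C(Z)$ is the line bundle with restrictions $\mathcal O_Z(-n)$ on $Z$ and $\mathcal O_{Z'}(n)$ on $Z'$. Given a multidegree $\underline d$ of total degree $d$, a tail $Z$ is $\underline d$-big if $d_Z\cdot\deg\omega_C-d\cdot\deg(\omega_C|_Z)<2g_Z-g_C$,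 and $\mathcal T_{\underline d}(X)$ is the set of $\underline d$-big tails $Z$ with $X\not\subseteq Z$. *)

(* Defs.v *)
(* A compact-type nodal curve is encoded by its dual graph:
   components = vertices of a finType V, nodes = edges of a symmetric
   irreflexive relation e, and gen v = geometric genus of component v. *)
From HB Require Import structures.
From mathcomp Require Import all_boot all_order all_algebra.
Set Implicit Arguments. Unset Strict Implicit. Unset Printing Implicit Defensive.
Import Order.TTheory GRing.Theory Num.Theory.
Local Open Scope ring_scope.

Section CurveComb.
Variables (V : finType) (e : rel V) (gen : V -> nat).

Definition compact_type : Prop :=
  (forall u v : V, connect e u v) /\
  (forall u v : V, e u v ->
     ~~ connect [rel a b | e a b && ~~ (((a == u) && (b == v)) || ((a == v) && (b == u)))] u v).

Definition stable_curve : Prop :=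
  forall v : V, gen v = 0%N -> (3 <= #|[set w | e v w]|)%N.

(* number of nodes of C lying on two components of Y (e symmetric: each
   node counted twice among ordered pairs) *)
Definition nodes_in (Y : {set V}) : nat :=
  (#|[set p : V * V | [&& p.1 \in Y, p.2 \in Y & e p.1 p.2]]| %/ 2)%N.

Definition kY (Y : {set V}) : nat :=
  #|[set p : V * V | [&& p.1 \in Y, p.2 \notin Y & e p.1 p.2]]|.

(* g_Y = 1 - chi(O_Y) = sum_{X_i in Y} g_i - #Y + #nodes in Y + 1 *)
Definition genus_sub (Y : {set V}) : int :=
  (\sum_(v in Y) gen v)%N%:Z - (#|Y|)%:Z + (nodes_in Y)%:Z + 1.

Definition genusC : int := genus_sub setT.

(* deg omega_C|_Y = 2 g_Y - 2 + k_Y *)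
Definition degw (Y : {set V}) : int := 2 * genus_sub Y - 2 + (kY Y)%:Z.

Definition degS (d : V -> int) (Y : {set V}) : int := \sum_(v in Y) d v.
Definition total (d : V -> int) : int := degS d setT.

Definition discr (d : V -> int) (Y : {set V}) : rat :=
  (degS d Y)%:~R - (total d)%:~R / (2 * genusC - 2)%:~R * (degw Y)%:~R.

Definition semistable (d : V -> int) : Prop :=
  forall Y : {set V}, Y != set0 -> Y != setT ->
    `|discr d Y| <= (kY Y)%:R / 2.

Definition quasistable (X : V) (d : V -> int) : Prop :=
  semistable d /\
  forall Y : {set V}, X \in Y -> Y != setT -> - ((kY Y)%:R / 2) < discr d Y.

Definition is_tail (Z : {set V}) : bool := kY Z == 1%N.

Definition big_tail (d : V -> int) (Z : {set V}) : bool :=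
  is_tail Z &&
  (degS d Z * (2 * genusC - 2) - total d * degw Z < 2 * genus_sub Z - genusC).

Definition big_tails (d : V -> int) (X : V) : {set {set V}} :=
  [set Z | big_tail d Z & X \notin Z].

(* multidegree of O_C(Z): on Z, minus the number of nodes joining v to Z';
   on Z', the number of nodes joining v to Z.  For a tail this is
   -1 at the component of Z through n, +1 at the component of Z' through n. *)
Definition tailDeg (Z : {set V}) (v : V) : int :=
  if v \in Z then - (#|[set w | (w \notin Z) && e v w]|)%:Z
  else (#|[set w | (w \in Z) && e v w]|)%:Z.

Definition unitDeg (X : V) (v : V) : int := (v == X)%:Z.

(* multidegree of M (x) M' (x) O_C(- sum_{Z in T_d(X)} Z) *)
Definition twisted (X : V) (d : V -> int) (v : V) : int :=
  d v + unitDeg X v - \sum_(Z in big_tails d X) tailDeg Z v.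

End CurveComb.

(* Main.v *)
Require Import Defs.
From HB Require Import structures.
From mathcomp Require Import all_boot all_order all_algebra.
Set Implicit Arguments. Unset Strict Implicit. Unset Printing Implicit Defensive.
Import Order.TTheory GRing.Theory Num.Theory.

Section Tree.
Variables (V : finType) (e : rel V).
Hypothesis e_sym : symmetric e.
Hypothesis e_irr : irreflexive e.
Hypothesis Hcon : forall u v : V, connect e u v.
Hypothesis Hsep : forall u v : V, e u v ->
     ~~ connect [rel a b | e a b && ~~ (((a == u) && (b == v)) || ((a == v) && (b == u)))] u v.

Definition erm (u v : V) : rel V :=
  [rel a b | e a b && ~~ (((a == u) && (b == v)) || ((a == v) && (b == u)))].
Definition D (u : V) : rel V := [rel x y | [&& e x y, x != u & y != u]].
Definition Tl (u b : V) : {set V} := [set w | connect (D u) b w].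
Definition cross (Y : {set V}) : {set V * V} :=
  [set p : V * V | [&& p.1 \in Y, p.2 \notin Y & e p.1 p.2]].

Lemma kYE Y : kY e Y = #|cross Y|. Proof. by []. Qed.

Lemma D_sym u : symmetric (D u).
Proof. by move=> x y; rewrite /D /= e_sym; case: (e y x) (x != u) (y != u) => [] [] []. Qed.

Lemma erm_sym u v : symmetric (erm u v).
Proof.
move=> x y; rewrite /erm /= e_sym.
by case: (x == u) (y == v) (x == v) (y == u) => [] [] [] []; rewrite ?andbF.
Qed.

Lemma e_neq x y : e x y -> x != y.
Proof. by apply: contraTneq => ->; rewrite e_irr. Qed.

Lemma exit (Y : {set V}) x c : x \in Y -> c \notin Y ->
  exists a b, [/\ a \in Y, b \notin Y, e a b & connect (D b) a x].
Proof.
move=> xY cY; case/connectP: (Hcon x c) => p.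
elim: p x xY => [|y p IH] x xY /=; first by move=> _ eq; rewrite eq xY in cY.
case/andP=> exy py lastc.
case yY: (y \in Y); last first.
  by exists x, y; rewrite yY exy; split => //; apply: connect0.
have [a [b [aY bY eab cab]]] := IH y yY py lastc.
exists a, b; split => //; apply: connect_trans cab (connect1 _).
rewrite /D /= e_sym exy /=; apply/andP; split.
  by apply: contraNneq bY => <-.
by apply: contraNneq bY => <-.
Qed.

Lemma Tl_self u b : b \in Tl u b.
Proof. by rewrite inE connect0. Qed.

Lemma Tl_closed u b x y : x \in Tl u b -> D u x y -> y \in Tl u b.
Proof. by rewrite !inE => cx dxy; apply: connect_trans cx (connect1 dxy). Qed.

Lemma notin_Tl u b : b != u -> u \notin Tl u b.
Proof.
move=> bu; rewrite inE; apply/negP; case/connectP=> p.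
case/lastP: p => [|q y] /=; first by move=> _ ub; rewrite ub eqxx in bu.
rewrite rcons_path last_rcons => /andP[_ /and3P[_ _ yu]] uy.
by rewrite -uy eqxx in yu.
Qed.

Lemma connect_sub_rel (r1 r2 : rel V) x y :
  subrel r1 r2 -> connect r1 x y -> connect r2 x y.
Proof.
move=> s; apply: connect_sub => a b /s; exact: connect1.
Qed.

Lemma sepb u b : e u b -> ~~ connect (erm u b) b u.
Proof.
move=> eub; apply/negP => c; move/negP: (Hsep eub); apply.
by rewrite (sym_connect_sym (@erm_sym u b)).
Qed.

Lemma Tl_disj u a b w : e u a -> e u b -> a != b ->
  w \in Tl u a -> w \in Tl u b -> False.
Proof.
move=> eua eub ab; rewrite !inE => ca cb.
rewrite (sym_connect_sym (@D_sym u)) in cb.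
have cab := connect_trans ca cb.
have c2 : connect (erm u a) a b.
  apply: connect_sub_rel cab => x y; rewrite /D /erm /= => /and3P[-> xu yu] /=.
  by rewrite (negbTE xu) (negbTE yu) !andbF.
have c3 : connect (erm u a) a u.
  apply: connect_trans c2 (connect1 _); rewrite /erm /=.
  rewrite e_sym eub /= negb_or !negb_and; apply/andP; split.
    by rewrite eq_sym e_neq.
  by rewrite eq_sym ab.
by move/negP: (sepb eua); apply.
Qed.

Lemma Tl_cover u w : w != u -> exists2 b, e u b & w \in Tl u b.
Proof.
move=> wu.
have wY : w \in [set x | x != u] by rewrite inE.
have uY : u \notin [set x | x != u] by rewrite inE negbK.
have [a [b [aY bY eab cab]]] := exit wY uY.
move: aY bY; rewrite !inE negbK => au /eqP bu; subst b.
exists a; first by rewrite e_sym.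
by rewrite inE.
Qed.

Lemma Tl_compl u b : e u b -> Tl b u = ~: Tl u b.
Proof.
move=> eub; have bu : b != u by rewrite eq_sym e_neq.
apply/setP => w; rewrite inE; apply/idP/idP.
  rewrite !inE => c1; apply/negP => c2.
  have h1 : connect (erm u b) u w.
    apply: connect_sub_rel c1 => x y; rewrite /D /erm /= => /and3P[-> xb yb] /=.
    by rewrite negb_or !negb_and (negbTE xb) (negbTE yb) !orbT.
  have h2 : connect (erm u b) b w.
    apply: connect_sub_rel c2 => x y; rewrite /D /erm /= => /and3P[-> xu yu] /=.
    by rewrite negb_or !negb_and (negbTE xu) (negbTE yu) !orbT.
  rewrite (sym_connect_sym (@erm_sym u b)) in h2.
  by move/negP: (Hsep eub); apply; apply: connect_trans h1 h2.
rewrite !inE => wn; case: (boolP (connect (D b) u w)) => // wn2; exfalso.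
have wY : w \in ~: (Tl u b :|: Tl b u) by rewrite !inE negb_or wn wn2.
have uY : u \notin ~: (Tl u b :|: Tl b u) by rewrite !inE negbK connect0 orbT.
have [a [c [aY cY eac _]]] := exit wY uY.
move: aY cY; rewrite !in_setC !in_setU negb_or negbK => /andP[a1 a2] /orP[] cT.
  have cu : c != u by apply: contraTneq cT => ->; rewrite notin_Tl.
  have au : a != u by apply: contraNneq a2 => ->; rewrite Tl_self.
  have dca : D u c a by rewrite /D /= e_sym eac cu au.
  by move: a1; rewrite (Tl_closed cT dca).
have cb : c != b by apply: contraTneq cT => ->; rewrite notin_Tl // eq_sym.
have ab : a != b by apply: contraNneq a1 => ->; rewrite Tl_self.
have dca : D b c a by rewrite /D /= e_sym eac cb ab.
by move: a2; rewrite (Tl_closed cT dca).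
Qed.

Lemma cross_Tl u b : e u b -> cross (Tl u b) = [set (b, u)].
Proof.
move=> eub; have bu : b != u by rewrite eq_sym e_neq.
apply/setP => [[x y]]; rewrite /cross in_set in_set1 /= xpair_eqE; apply/idP/idP.
  case/and3P=> xT yT exy.
  have xu : x != u by apply: contraTneq xT => ->; rewrite notin_Tl.
  case: (eqVneq y u) => [yu|yu]; last first.
    have dxy : D u x y by rewrite /D /= exy xu yu.
    by move: yT; rewrite (Tl_closed xT dxy).
  subst y; rewrite andbT; apply/negPn/negP => xb.
  by apply: (@Tl_disj u x b x); rewrite ?Tl_self // e_sym.
case/andP=> /eqP -> /eqP ->; rewrite Tl_self notin_Tl //=. by rewrite e_sym.
Qed.

Lemma kY_Tl u b : e u b -> kY e (Tl u b) = 1%N.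
Proof. by move=> eub; rewrite kYE cross_Tl // cards1. Qed.

Lemma zero_cross W x : cross W = set0 -> x \notin W -> W = set0.
Proof.
move=> c0 xW; apply/eqP; apply/set0Pn => -[y yW].
have [a [b [aW bW eab _]]] := exit yW xW.
have : (a, b) \in cross W by rewrite inE /= aW bW eab.
by rewrite c0 inE.
Qed.


Local Open Scope ring_scope.

Lemma half_n n : (1/2 : rat) *+ n = n%:R / 2.
Proof. by rewrite -(mulr_natl (1/2) n) mulrA mulr1. Qed.

Lemma sum_setC (nu : V -> rat) (A : {set V}) :
  \sum_(v in ~: A) nu v = \sum_v nu v - \sum_(v in A) nu v.
Proof.
rewrite [X in _ = X - _](bigID (fun v => v \in A)) /= addrC addrK.
by apply: eq_bigl => v; rewrite inE.
Qed.

Lemma ind_sum (nu : V -> rat) u w :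
  \sum_(b | e u b) (if w \in Tl u b then nu w else 0) = if w == u then 0 else nu w.
Proof.
case: (eqVneq w u) => [->|wu].
  by apply: big1 => b eub; rewrite (negbTE (notin_Tl _)) // eq_sym e_neq.
have [b0 eub0 wT] := Tl_cover wu.
rewrite (bigD1 b0) //= wT big1 ?addr0 // => b /andP[eub bb0].
case: ifP => // wb; exfalso; exact: (Tl_disj eub eub0 bb0 wb wT).
Qed.

Lemma nu_vertex (nu : V -> rat) (H0 : \sum_v nu v = 0) u :
  nu u = - \sum_(b | e u b) \sum_(w in Tl u b) nu w.
Proof.
have -> : \sum_(b | e u b) \sum_(w in Tl u b) nu w =
          \sum_(b | e u b) \sum_w (if w \in Tl u b then nu w else 0).
  by apply: eq_bigr => b _; rewrite big_mkcond.
rewrite exchange_big /=.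
under eq_bigr do rewrite ind_sum.
rewrite (bigD1 u) //= eqxx add0r.
move: H0; rewrite (bigD1 u) //= => H0.
have -> : \sum_(i | i != u) (if i == u then 0 else nu i) = \sum_(i | i != u) nu i.
  by apply: eq_bigr => i /negbTE ->.
by apply/eqP; rewrite -addr_eq0 H0.
Qed.

Lemma nu_Tl_compl (nu : V -> rat) (H0 : \sum_v nu v = 0) u b : e u b ->
  \sum_(w in Tl b u) nu w = - \sum_(w in Tl u b) nu w.
Proof. by move=> eub; rewrite Tl_compl // sum_setC H0 sub0r. Qed.

Lemma nu_cross (nu : V -> rat) (H0 : \sum_v nu v = 0) (Y : {set V}) :
  \sum_(v in Y) nu v = - \sum_(p in cross Y) \sum_(w in Tl p.1 p.2) nu w.
Proof.
transitivity (- \sum_(v in Y) \sum_(b | e v b) \sum_(w in Tl v b) nu w).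
  by rewrite -sumrN; apply: eq_bigr => v _; rewrite -nu_vertex.
rewrite pair_big_dep (bigID (fun p : V * V => p.2 \in Y)) /=.
set J := \sum_(i | _ && _ && _) _.
have HJ : J = - J.
  rewrite {1}/J (reindex_inj (h := fun p : V * V => (p.2, p.1))); last first.
    by apply: inv_inj => -[].
  rewrite /J /= -sumrN; apply: eq_big => [p|p].
    by rewrite e_sym; case: (p.1 \in Y) (p.2 \in Y) (e p.1 p.2) => [] [] [].
  by case/andP=> /andP[_ ep] _; rewrite (nu_Tl_compl H0) // e_sym.
have -> : J = 0.
  have : J *+ 2 = 0 by rewrite mulr2n {1}HJ addNr.
  by move/eqP; rewrite mulrn_eq0 /= => /eqP.
rewrite add0r; congr (- _); apply: eq_bigl => p; rewrite inE.
by case: (p.1 \in Y) (p.2 \in Y) (e p.1 p.2) => [] [] [].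
Qed.

Lemma cross_e (Y : {set V}) p : p \in cross Y -> e p.1 p.2.
Proof. by rewrite inE => /and3P[]. Qed.

Lemma red_semi (nu : V -> rat) (H0 : \sum_v nu v = 0)
  (Hb : forall u b, e u b -> `|\sum_(w in Tl u b) nu w| <= 1/2) (Y : {set V}) :
  `|\sum_(v in Y) nu v| <= (#|cross Y|)%:R / 2.
Proof.
rewrite (nu_cross H0) normrN; apply: le_trans; first exact: ler_norm_sum.
apply: (@le_trans _ _ (\sum_(p in cross Y) (1/2 : rat))).
  by apply: ler_sum => p /cross_e; apply: Hb.
by rewrite sumr_const half_n.
Qed.

Lemma red_quasi (nu : V -> rat) (H0 : \sum_v nu v = 0) X
  (Hb : forall u b, e u b -> `|\sum_(w in Tl u b) nu w| <= 1/2)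
  (Hs : forall u b, e u b -> X \notin Tl u b -> \sum_(w in Tl u b) nu w < 1/2)
  (Y : {set V}) : X \in Y -> Y != setT -> - ((#|cross Y|)%:R / 2) < \sum_(v in Y) nu v.
Proof.
move=> XY YT.
have : ~~ (setT \subset Y) by rewrite subTset.
case/subsetPn => c _ cY.
have [a [b [aY bY eab cab]]] := exit XY cY.
have XT : X \notin Tl a b.
  have : X \in Tl b a by rewrite inE.
  by rewrite Tl_compl // inE.
have p0 : (a, b) \in cross Y by rewrite inE /= aY bY eab.
rewrite (nu_cross H0) ltrN2.
have -> : (#|cross Y|)%:R / 2 = \sum_(p in cross Y) (1/2 : rat).
  by rewrite sumr_const half_n.
rewrite (bigD1 (a, b)) //= [X in _ < X](bigD1 (a, b)) //=.
apply: ltr_leD; first exact: Hs.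
apply: ler_sum => p /andP[/cross_e ep _].
by have := Hb _ _ ep; rewrite ler_norml => /andP[].
Qed.

Lemma cross1 (Z : {set V}) : kY e Z = 1%N -> exists z0 z1, cross Z = [set (z0, z1)].
Proof. by rewrite kYE => /eqP/cards1P [[z0 z1] ->]; exists z0, z1. Qed.

Lemma cross1_mem (Z : {set V}) z0 z1 : cross Z = [set (z0, z1)] ->
  [/\ z0 \in Z, z1 \notin Z & e z0 z1].
Proof.
move=> H; have : (z0, z1) \in cross Z by rewrite H in_set1.
by rewrite inE => /and3P[].
Qed.

Lemma in_cross1 (Z : {set V}) z0 z1 x y : cross Z = [set (z0, z1)] ->
  x \in Z -> y \notin Z -> e x y -> x = z0 /\ y = z1.
Proof.
move=> H xZ yZ exy; have : (x, y) \in cross Z by rewrite inE /= xZ yZ exy.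
by rewrite H in_set1 xpair_eqE => /andP[/eqP -> /eqP ->].
Qed.

Lemma tailDegE (Z : {set V}) z0 z1 : cross Z = [set (z0, z1)] ->
  forall v, tailDeg e Z v = (v == z1)%:Z - (v == z0)%:Z.
Proof.
move=> H v; have [z0Z z1Z ez] := cross1_mem H.
have z01 : (z0 == z1) = false by apply/negbTE; apply: contraNneq z1Z => <-.
rewrite /tailDeg; case: ifP => vZ.
  have vz1 : (v == z1) = false by apply/negbTE; apply: contraNneq z1Z => <-.
  rewrite vz1 sub0r; congr (- _); congr (Posz _).
  case: (eqVneq v z0) => [vz0|vz0].
    subst v; rewrite -[RHS]/1%N -(cards1 z1); apply: eq_card => w; rewrite !inE.
    apply/idP/idP; first by case/andP => wZ ew; have [_ ->] := in_cross1 H z0Z wZ ew.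
    by move/eqP ->; rewrite z1Z ez.
  apply/eqP; rewrite cards_eq0; apply/eqP/setP => w; rewrite !inE.
  apply/negP => /andP[wZ ew]; have [vz _] := in_cross1 H vZ wZ ew.
  by rewrite vz eqxx in vz0.
have vz0 : (v == z0) = false by apply/negbTE; apply: contraFneq vZ => ->.
rewrite vz0 subr0; congr (Posz _).
case: (eqVneq v z1) => [vz1|vz1].
  subst v; rewrite -[RHS]/1%N -(cards1 z0); apply: eq_card => w; rewrite !inE.
  apply/idP/idP.
    by case/andP => wZ ew; rewrite e_sym in ew; have [-> _] := in_cross1 H wZ z1Z ew.
  by move/eqP ->; rewrite z0Z e_sym ez.
apply/eqP; rewrite cards_eq0; apply/eqP/setP => w; rewrite !inE.
apply/negP => /andP[wZ ew]; rewrite e_sym in ew.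
have [_ vz] := in_cross1 H wZ (negbT vZ) ew.
by rewrite vz eqxx in vz1.
Qed.

Lemma sum_ind_int (Y : {set V}) z : \sum_(v in Y) ((v == z)%:Z : int) = (z \in Y)%:Z.
Proof.
case zY: (z \in Y).
  rewrite (bigD1 z) //= eqxx big1 ?addr0 // => v /andP[_ /negbTE ->] //.
by apply: big1 => v vY; case: eqP vY zY => // ->->.
Qed.

Lemma degS_tail (Z : {set V}) z0 z1 (Y : {set V}) : cross Z = [set (z0, z1)] ->
  degS (tailDeg e Z) Y = (z1 \in Y)%:Z - (z0 \in Y)%:Z.
Proof.
move=> H; rewrite /degS.
under eq_bigr do rewrite (tailDegE H).
by rewrite sumrB !sum_ind_int.
Qed.

Lemma same_cross (Y Z : {set V}) a b X : cross Y = [set (a, b)] ->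
  cross Z = [set (a, b)] -> X \notin Y -> Y :\: Z = set0.
Proof.
move=> HY HZ XY; have [aY bY eab] := cross1_mem HY; have [aZ bZ _] := cross1_mem HZ.
apply: (zero_cross (x := X)); last by rewrite in_setD (negbTE XY) andbF.
apply/setP => -[p q]; rewrite inE in_set0 /= !in_setD; apply/negP.
case/and3P => /andP[pZ pY] qYZ epq.
case qY: (q \in Y).
  move: qYZ; rewrite qY andbT negbK => qZ.
  rewrite e_sym in epq; have [_ pb] := in_cross1 HZ qZ pZ epq.
  by rewrite -pb pY in bY.
have [pa _] := in_cross1 HY pY (negbT qY) epq.
by rewrite pa aZ in pZ.
Qed.

Lemma tail_cases (Y Z : {set V}) y0 y1 z0 z1 X :
  cross Y = [set (y0, y1)] -> cross Z = [set (z0, z1)] ->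
  X \notin Y -> X \notin Z ->
  ((z1 \in Y)%:Z - (z0 \in Y)%:Z : int) = - (Z == Y)%:Z.
Proof.
move=> HY HZ XY XZ; have [z0Z z1Z ez] := cross1_mem HZ; have [y0Y y1Y ey] := cross1_mem HY.
case z0Y: (z0 \in Y); case z1Y: (z1 \in Y).
- have -> : (Z == Y) = false.
    by apply/negbTE; apply: contraNneq z1Z => ->; rewrite z1Y.
  by rewrite subrr oppr0.
- have [e0 e1] := in_cross1 HY z0Y (negbT z1Y) ez; subst y0 y1.
  have h1 := same_cross HY HZ XY; have h2 := same_cross HZ HY XZ.
  have -> : Z = Y.
    apply/eqP; rewrite eqEsubset -!setD_eq0 h1 h2 !eqxx //.
  by rewrite eqxx.
- exfalso; rewrite e_sym in ez.
  have [e0 e1] := in_cross1 HY z1Y (negbT z0Y) ez; subst y0 y1.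
  have : Y :|: Z = set0.
    apply: (zero_cross (x := X)); last by rewrite in_setU negb_or XY XZ.
    apply/setP => -[p q]; rewrite inE in_set0 /= !in_setU negb_or; apply/negP.
    case/and3P => /orP[pY|pZ] /andP[qY qZ] epq.
      by have [_ qe] := in_cross1 HY pY qY epq; rewrite qe z0Z in qZ.
    by have [_ qe] := in_cross1 HZ pZ qZ epq; rewrite qe z1Y in qY.
  by move/setP/(_ z0); rewrite in_setU z0Z orbT in_set0.
- have -> : (Z == Y) = false.
    by apply/negbTE; apply: contraTneq z0Z => ->; rewrite z0Y.
  by rewrite subrr oppr0.
Qed.

Lemma int_id (S n m k : nat) :
  2 * (S%:Z - n%:Z + m%:Z + 1) - 2 + k%:Z = 2 * S%:Z + 2 * m%:Z + k%:Z - 2 * n%:Z.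
Proof.
rewrite mulrDr mulr1 addrK mulrDr mulrBr.
by rewrite (addrAC (2 * S%:Z)) [LHS]addrAC.
Qed.

Lemma nodes2 (Y : {set V}) :
  ((nodes_in e Y).*2 + kY e Y)%N = (\sum_(v in Y) #|[set w | e v w]|)%N.
Proof.
set P := [set p : V * V | [&& p.1 \in Y, p.2 \in Y & e p.1 p.2]].
pose C (p : V * V) := (enum_rank p.1 < enum_rank p.2)%N.
have evenP : #|P| = (#|[set p in P | C p]|).*2.
  rewrite -addnn -sum1_card (bigID C) /=.
  have h1 : #|[set p in P | C p]| = (\sum_(p | (p \in P) && C p) 1)%N.
    by rewrite -sum1_card; apply: eq_bigl => p; rewrite inE.
  rewrite h1; congr (_ + _)%N.
  rewrite (reindex_inj (h := fun p : V * V => (p.2, p.1))); last by apply: inv_inj => -[].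
  apply: eq_bigl => -[x y] /=; rewrite !inE /=.
  case exy: (e x y); last by rewrite e_sym exy !andbF.
  rewrite e_sym exy /C /=; case: (x \in Y) (y \in Y) => [] [] //=.
  have xy : (nat_of_ord (enum_rank x) == enum_rank y) = false.
    apply/negbTE; apply: contraTneq exy => /val_inj/enum_rank_inj ->.
    by rewrite e_irr.
  by rewrite -leqNgt leq_eqVlt xy.
rewrite /nodes_in -/P evenP divn2 doubleK -evenP.
have -> : (\sum_(v in Y) #|[set w | e v w]|)%N = (\sum_(v in Y) \sum_(w | e v w) 1)%N.
  by apply: eq_bigr => v _; rewrite -sum1_card; apply: eq_bigl => w; rewrite inE.
rewrite pair_big_dep /= (bigID (fun p : V * V => p.2 \in Y)) /=.
rewrite kYE; congr (_ + _)%N.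
  rewrite -sum1_card; apply: eq_bigl => p; rewrite inE.
  by case: (p.1 \in Y) (p.2 \in Y) (e p.1 p.2) => [] [] [].
rewrite -sum1_card; apply: eq_bigl => p; rewrite inE.
by case: (p.1 \in Y) (p.2 \in Y) (e p.1 p.2) => [] [] [].
Qed.

Lemma degw_sum (gen : V -> nat) (Y : {set V}) :
  degw e gen Y = \sum_(v in Y) ((2 * gen v + #|[set w | e v w]|)%N%:Z - 2).
Proof.
rewrite /degw /genus_sub int_id sumrB sumr_const.
have -> : \sum_(v in Y) ((2 * gen v + #|[set w | e v w]|)%N%:Z) =
          ((2 * \sum_(v in Y) gen v) + ((nodes_in e Y).*2 + kY e Y))%N%:Z.
  rewrite nodes2 big_distrr -big_split /= -natz natr_sum.
  by apply: eq_bigr => v _; rewrite natz.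
rewrite -(mulr_natr (2:int) #|Y|) natz PoszD (PoszM 2) PoszD -muln2 PoszM.
rewrite addrA (mulrC (Posz (nodes_in e Y))); congr (_ + _ + _ - _ * _); by rewrite ?natz.
Qed.

End Tree.
Local Open Scope ring_scope.

Lemma sum_ind_gen (T : finType) (A : {set T}) z :
  \sum_(v in A) ((v == z)%:Z : int) = (z \in A)%:Z.
Proof.
case zA: (z \in A).
  rewrite (bigD1 z) //= eqxx big1 ?addr0 // => v /andP[_ /negbTE ->] //.
by apply: big1 => v vA; case: eqP vA zA => // ->->.
Qed.

Lemma final_ineq (a t : rat) (b : bool) : -(1/2) <= a -> a < 1/2 -> 0 < t -> t < 1 ->
  b = (a < t - 1/2) -> -(1/2) <= a + b%:R - t /\ a + b%:R - t < 1/2.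
Proof.
move=> h1 h2 t0 t1 ->.
case: ltrP => hb /=.
- rewrite -addrA; split.
    rewrite -[X in X <= _]addr0; apply: lerD => //.
    by rewrite subr_ge0 ltW.
  rewrite -(ltrD2r (1 - t)) in hb; apply: lt_le_trans hb _.
  rewrite addrC addrA subrK; apply/eqP.
  by [].
- rewrite addr0; split.
    rewrite -(lerD2r (- t)) in hb; apply: le_trans hb.
    by rewrite addrAC subrr add0r.
  rewrite -[X in _ < X]addr0; apply: ltr_leD => //.
  by rewrite oppr_le0 ltW.
Qed.

Section Main.
Variables (V : finType) (e : rel V) (gen : V -> nat).
Hypothesis e_sym : symmetric e.
Hypothesis e_irr : irreflexive e.
Hypothesis Hcon : forall u v : V, connect e u v.
Hypothesis Hsep : forall u v : V, e u v ->
     ~~ connect [rel a b | e a b && ~~ (((a == u) && (b == v)) || ((a == v) && (b == u)))] u v.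
Hypothesis Hst : stable_curve e gen.
Hypothesis Hg : 2 <= genusC e gen.

Definition NN : int := 2 * genusC e gen - 2.
Definition wv (v : V) : int := (2 * gen v + #|[set w | e v w]|)%N%:Z - 2.
Definition cc (f : V -> int) : rat := (Defs.total f)%:~R / NN%:~R.
Definition nuf (f : V -> int) (v : V) : rat := (f v)%:~R - cc f * (wv v)%:~R.

Lemma NN_gt0 : 0 < NN.
Proof.
rewrite /NN subr_gt0; apply: (@lt_le_trans _ _ (2 * 2)) => //.
by rewrite ler_pM2l.
Qed.

Lemma NQ_gt0 : 0 < (NN%:~R : rat).
Proof. by rewrite ltr0z NN_gt0. Qed.

Lemma NQ_neq0 : (NN%:~R : rat) != 0.
Proof. by rewrite gt_eqF // NQ_gt0. Qed.

Lemma degw_wv (Y : {set V}) : degw e gen Y = \sum_(v in Y) wv v.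
Proof. exact: degw_sum. Qed.

Lemma discrE f (Y : {set V}) : discr e gen f Y = \sum_(v in Y) nuf f v.
Proof.
rewrite /discr -/NN -/(cc f) degw_wv /degS rmorph_sum [X in _ * X]rmorph_sum mulr_sumr -sumrB.
by [].
Qed.

Lemma degw_setT : degw e gen setT = NN.
Proof.
rewrite /degw kYE (_ : cross e setT = set0) ?cards0 ?addr0 //.
by apply/setP => p; rewrite !inE andbF.
Qed.

Lemma sum_nu0 f : \sum_v nuf f v = 0.
Proof.
rewrite (_ : \sum_v nuf f v = \sum_(v in setT) nuf f v); last first.
  by apply: eq_bigl => v; rewrite in_setT.
rewrite -discrE /discr degw_setT divfK ?NQ_neq0 //.
by rewrite subrr.
Qed.

Lemma degS_twisted X d (Y : {set V}) :
  degS (twisted e gen X d) Y = degS d Y + (X \in Y)%:Z -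
    \sum_(Z in big_tails e gen d X) degS (tailDeg e Z) Y.
Proof.
rewrite /degS /twisted sumrB big_split /=; congr (_ + _ - _).
  by rewrite /unitDeg sum_ind_gen.
by rewrite exchange_big.
Qed.

Lemma BT_tail X d Z : Z \in big_tails e gen d X -> kY e Z = 1%N /\ X \notin Z.
Proof. by rewrite inE => /andP[/andP[/eqP h _] hX]. Qed.

Lemma total_twisted X d : Defs.total (twisted e gen X d) = Defs.total d + 1.
Proof.
rewrite /Defs.total degS_twisted in_setT big1 ?subr0 // => Z /BT_tail [h _].
have [z0 [z1 hz]] := cross1 h.
by rewrite (degS_tail e_sym _ hz) !in_setT subrr.
Qed.

Lemma degS_twisted_tail X d u b : e u b -> X \notin Tl e u b ->
  degS (twisted e gen X d) (Tl e u b) =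
  degS d (Tl e u b) + (Tl e u b \in big_tails e gen d X)%:Z.
Proof.
move=> eub XT; rewrite degS_twisted (negbTE XT) addr0.
rewrite (eq_bigr (fun Z => - ((Z == Tl e u b)%:Z))); last first.
  move=> Z /BT_tail [h XZ]; have [z0 [z1 hz]] := cross1 h.
  rewrite (degS_tail e_sym _ hz).
  exact: (tail_cases e_sym Hcon (cross_Tl e_sym e_irr Hsep eub) hz XT XZ).
by rewrite sumrN sum_ind_gen opprK.
Qed.

Lemma wv_ge1 u b v : e u b -> 1 <= wv v.
Proof.
move=> eub.
have [w ew] : exists w, e v w.
  case: (eqVneq v u) => [->|vu]; first by exists b.
  case/connectP: (Hcon v u) => -[|w p] /=.
    by move=> _ uv; rewrite uv eqxx in vu.
  by case/andP => evw _ _; exists w.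
rewrite /wv lerBrDr (_ : 1 + 2 = 3%:Z) // lez_nat.
have dpos : (0 < #|[set w | e v w]|)%N by apply/card_gt0P; exists w; rewrite inE.
case g0: (gen v) => [|g].
  by rewrite muln0 add0n; apply: Hst.
rewrite mulnS -addnA (_ : 3 = 2 + 1)%N // leq_add2l.
exact: leq_trans dpos (leq_addl _ _).
Qed.

Lemma sum_wv_ge1 u b (A : {set V}) x : e u b -> x \in A -> 1 <= \sum_(v in A) wv v.
Proof.
move=> eub xA; rewrite (bigD1 x) //= -[1]addr0; apply: lerD; first exact: wv_ge1 eub.
apply: sumr_ge0 => v _; apply: le_trans (wv_ge1 v eub) => //.
Qed.

Lemma sum_split_int (A : {set V}) (F : V -> int) :
  \sum_v F v = \sum_(v in A) F v + \sum_(v in ~: A) F v.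
Proof.
rewrite (bigID (fun v => v \in A)) /=; congr (_ + _).
by apply: eq_bigl => v; rewrite inE.
Qed.

Lemma wT_bounds u b : e u b ->
  0 < degw e gen (Tl e u b) /\ degw e gen (Tl e u b) < NN.
Proof.
move=> eub; have bu : b != u by rewrite eq_sym (e_neq e_irr eub).
rewrite degw_wv; split.
  apply: (lt_le_trans ltr01); exact: (sum_wv_ge1 eub (Tl_self e u b)).
rewrite -degw_setT degw_wv (_ : \sum_(v in setT) wv v = \sum_v wv v); last first.
  by apply: eq_bigl => v; rewrite in_setT.
rewrite (sum_split_int (Tl e u b)) -subr_gt0 (addrC (\sum_(v in Tl e u b) wv v)) addrK.
apply: (lt_le_trans ltr01); apply: (sum_wv_ge1 (x := u) eub).
by rewrite inE notin_Tl.
Qed.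

Lemma big_iff X d u b : e u b -> X \notin Tl e u b ->
  (Tl e u b \in big_tails e gen d X) =
  (discr e gen d (Tl e u b) < (degw e gen (Tl e u b))%:~R / NN%:~R - 1/2).
Proof.
move=> eub XT; set T := Tl e u b.
rewrite /big_tails inE /big_tail /is_tail kY_Tl // eqxx /= XT andbT -/NN.
set x := degS d T * NN - Defs.total d * degw e gen T.
set y := 2 * genus_sub e gen T - genusC e gen.
have hy : 2 * y = 2 * degw e gen T - NN.
  rewrite /y /degw kY_Tl // /NN.
  move: (genus_sub e gen T) (genusC e gen) => G g.
  rewrite -addrA (_ : -2 + 1%:Z = -1) // !mulrDr !mulrN mulr1 opprB addrA subrK.
  by [].
rewrite -(ltr_pM2l (x := 2)) // hy -(ltr_int rat) /x.
rewrite -[RHS](ltr_pM2r NQ_gt0) -[RHS](ltr_pM2l (x := 2)) //.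
rewrite /discr -/NN; congr (_ < _).
  rewrite rmorphM rmorphB /= !rmorphM /=; congr (_ * _).
  by rewrite mulrBl (mulrAC _ _ NN%:~R) divfK ?NQ_neq0.
rewrite rmorphB /= rmorphM /= mulrBl divfK ?NQ_neq0 // mulrBr; congr (_ - _).
by rewrite mulrA (_ : 2 * (1 / 2) = 1 :> rat) ?mul1r //; apply/eqP.
Qed.

Lemma discr_twist_tail X d u b : e u b -> X \notin Tl e u b ->
  discr e gen (twisted e gen X d) (Tl e u b) =
  discr e gen d (Tl e u b) + (Tl e u b \in big_tails e gen d X)%:R
    - (degw e gen (Tl e u b))%:~R / NN%:~R.
Proof.
move=> eub XT; rewrite /discr -/NN total_twisted degS_twisted_tail //.
set a := degS d _; set F := Defs.total d; set w := degw e gen _.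
set N := NN; set bb := (_ \in _).
clearbody a F w N bb.
rewrite !rmorphD /= rmorph1 mulrDl mulrDl mul1r.
by rewrite opprD addrA (addrAC a%:~R) (mulrC N%:~R^-1).
Qed.

Lemma Kbound X d u b : quasistable e gen X d -> e u b -> X \notin Tl e u b ->
  -(1/2) <= discr e gen (twisted e gen X d) (Tl e u b) /\
  discr e gen (twisted e gen X d) (Tl e u b) < 1/2.
Proof.
move=> [HM1 HM2] eub XT.
have bu : b != u by rewrite eq_sym (e_neq e_irr eub).
have ebu : e b u by rewrite e_sym.
have kT : kY e (Tl e u b) = 1%N by apply: kY_Tl.
have T0 : Tl e u b != set0 by apply/set0Pn; exists b; apply: Tl_self.
have TT : Tl e u b != setT.
  by apply/negP => /eqP h; move: (notin_Tl e bu); rewrite h in_setT.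
have h1 := HM1 _ T0 TT; rewrite kT ler_norml in h1; case/andP: h1 => h1 _.
have h2 : discr e gen d (Tl e u b) < 1/2.
  have XT' : X \in Tl e b u by rewrite (Tl_compl e_sym e_irr Hcon Hsep eub) inE.
  have TT' : Tl e b u != setT.
    by apply/negP => /eqP h; move: (notin_Tl e (u := b) (b := u) (e_neq e_irr eub)); rewrite h in_setT.
  have := HM2 _ XT' TT'.
  rewrite (kY_Tl e_sym e_irr Hsep ebu) !discrE.
  by rewrite (nu_Tl_compl e_sym e_irr Hcon Hsep (sum_nu0 d) eub) ltrN2.
have [w0 w1] := wT_bounds eub.
rewrite discr_twist_tail //; apply: final_ineq => //.
- by rewrite divr_gt0 ?NQ_gt0 // ltr0z.
- by rewrite ltr_pdivrMr ?NQ_gt0 // mul1r ltr_int.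
- exact: big_iff.
Qed.

End Main.

Theorem mainTheorem3 (V : finType) (e : rel V) (gen : V -> nat)
  (e_sym : symmetric e) (e_irr : irreflexive e)
  (Hct : compact_type e) (Hst : stable_curve e gen)
  (Hg : 2 <= genusC e gen)
  (X : V) (d : V -> int)
  (HM : quasistable e gen X d) :
  quasistable e gen X (twisted e gen X d).
Proof.
case: Hct => Hcon Hsep.
set d' := twisted e gen X d.
have H0 := sum_nu0 e_sym e_irr Hg d'.
have HK := Kbound e_sym e_irr Hcon Hsep Hst Hg HM.
have Hs : forall u b, e u b -> X \notin Tl e u b ->
    \sum_(w in Tl e u b) nuf e gen d' w < 1/2.
  by move=> u b eub XT; rewrite -discrE //; case: (HK u b eub XT).
have Hb : forall u b, e u b -> `|\sum_(w in Tl e u b) nuf e gen d' w| <= 1/2.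
  move=> u b eub; rewrite -discrE // ler_norml.
  case: (boolP (X \in Tl e u b)) => XT; last first.
    by case: (HK u b eub XT) => h1 h2; rewrite h1 ltW.
  have ebu : e b u by rewrite e_sym.
  have XT' : X \notin Tl e b u.
    by move: XT; rewrite (Tl_compl e_sym e_irr Hcon Hsep ebu) inE.
  rewrite !discrE // (nu_Tl_compl e_sym e_irr Hcon Hsep H0 ebu).
  have [h1 h2] := HK b u ebu XT'; rewrite !discrE // in h1 h2.
  by rewrite lerN2 (ltW h2) lerNl h1.
split.
  move=> Y _ _; rewrite discrE // kYE.
  exact: (red_semi e_sym e_irr Hcon Hsep H0 Hb).
move=> Y XY YT; rewrite discrE // kYE.
exact: (red_quasi e_sym e_irr Hcon Hsep H0 Hb Hs).
Qed.
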